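(* Let $G$ be a connected bipartite graph with bipartition $(U,V)$, $|U|\ge|V|$. Let $V_W\subseteq V$ be the set of vertices of $V$ adjacent to a leaf, $\overline{V_W}=V\setminus V_W$, $U_L\subseteq U$ a set of leaves such that each $v\in V_W$ is adjacent to exactly one element of $U_L$ and $|U_L|=|V_W|$, and $\overline{U_L}=U\setminus U_L$. For $S\subseteq\overline{U_L}$ and $j\ge 1$ let $g_j(S)$ be the number of independent sets $\mathcal C$ of $G$ with $|\mathcal C|=j$ and $\mathcal C\cap\overline{U_L}=S$, and $g(S)=\sum_{j=1}^{\alpha(G)}(-1)^{j-1}g_j(S)$. Suppose $\overline{V_W}=\emptyset$. Then $g(S)=0$ for every nonempty $S\subseteq\overline{U_L}$, and $g(\emptyset)=0$ if $|V|$ is even, $g(\emptyset)=2$ if $|V|$ is odd.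
   Context: A leaf is a vertex with exactly one neighbor. An independent set is a set of pairwise non-adjacent vertices; $\alpha(G)$ is the maximum size of one. *)

(* Defs.v *)
From mathcomp Require Import all_boot all_order all_algebra.
Set Implicit Arguments. Unset Strict Implicit. Unset Printing Implicit Defensive.
Import GRing.Theory Num.Theory.

(* A simple graph on a finite vertex type T is a symmetric irreflexive
   relation e : rel T. *)
Section Graph.
Variables (T : finType) (e : rel T).

Definition leaf (x : T) : bool := #|[set y | e x y]| == 1.

Definition independent (C : {set T}) : bool :=
  [forall x in C, forall y in C, ~~ e x y].

Definition alpha : nat := \max_(C : {set T} | independent C) #|C|.

Definition VW (V : {set T}) : {set T} :=
  [set v in V | [exists u, e v u && leaf u]].

Definition gj (Ubar S : {set T}) (j : nat) : nat :=
  #|[set C : {set T} | independent C && (#|C| == j) && (C :&: Ubar == S)]|.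

Definition g (Ubar S : {set T}) : int :=
  (\sum_(1 <= j < alpha.+1) (-1) ^+ (j.-1) *+ gj Ubar S j)%R.

End Graph.

(* Main.v *)
Require Import Defs.
From mathcomp Require Import all_boot all_order all_algebra zify.
Import GRing.Theory Num.Theory.
Open Scope ring_scope.

Lemma inv_sum (I : finType) (P : pred I) (h : I -> int) (f : I -> I) :
  involutive f -> (forall i, P i -> P (f i)) ->
  (forall i, P i -> h (f i) = - h i) -> \sum_(i | P i) h i = 0.
Proof.
move=> finv Pf hf.
have PfE : forall i, P (f i) = P i.
  move=> i; apply/idP/idP => [H|/Pf //]; by rewrite -(finv i); apply: Pf.
set X := (X in X = _).
have : X = - X.
  rewrite {1}/X (reindex_inj (inv_inj finv)) /= (eq_bigl _ _ PfE) /X -sumrN.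
  by apply: eq_bigr => i /hf.
lia.
Qed.

Lemma independentP (T : finType) (e : rel T) (C : {set T}) :
  reflect (forall x y, x \in C -> y \in C -> ~~ e x y) (independent e C).
Proof.
rewrite /independent; apply: (iffP forall_inP) => [H x y xC yC | H x xC].
  by move/forall_inP: (H x xC); apply.
by apply/forall_inP => y yC; apply: H.
Qed.

Lemma sum_single (k m n : nat) (x : int) :
  \sum_(m <= j < n) (if k == j then x else 0) = if (m <= k < n)%N then x else 0.
Proof.
elim: n => [|n IH]; first by rewrite big_geq // ltn0 andbF.
case: (leqP m n) => mn; last first.
  rewrite big_geq //; case: ifP => //; lia.
rewrite big_nat_recr //= IH.
do 3 case: ifP => ?; lia.
Qed.

Lemma independent0 (T : finType) (e : rel T) : independent e set0.
Proof. by apply/independentP => x y; rewrite inE. Qed.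

Lemma g_F (T : finType) (e : rel T) (Ubar S : {set T}) :
  g e Ubar S = (S == set0)%:R -
    \sum_(C : {set T} | independent e C && (C :&: Ubar == S)) (-1) ^+ #|C|.
Proof.
rewrite /g.
have E j : (-1) ^+ j.-1 *+ gj e Ubar S j =
   \sum_(C : {set T} | independent e C && (C :&: Ubar == S) && (#|C| == j))
      (-1) ^+ (#|C|.-1) :> int.
  rewrite /gj -sumr_const; apply: eq_big => C; first by rewrite inE andbAC.
  by rewrite inE => /andP[/andP[_ /eqP ->] _].
under eq_bigr => j _ do rewrite E big_mkcondr.
rewrite exchange_big /=.
have -> : \sum_(C : {set T} | independent e C && (C :&: Ubar == S))
     \sum_(1 <= j < (alpha e).+1) (if #|C| == j then (-1) ^+ (#|C|.-1) else 0)
   = \sum_(C : {set T} | independent e C && (C :&: Ubar == S) && (0 < #|C|)%N)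
        (-1) ^+ (#|C|.-1) :> int.
  rewrite [RHS]big_mkcondr; apply: eq_bigr => C /andP[indC _].
  rewrite sum_single.
  have hC : (#|C| <= alpha e)%N by apply: (@leq_bigmax_cond _ (independent e) (fun C => #|C|)).
  by rewrite ltnS hC andbT.
rewrite [in RHS](bigID (fun C => C == set0)) /=.
have -> : \sum_(C : {set T} | independent e C && (C :&: Ubar == S) && (C == set0))
    (-1) ^+ #|C| = (S == set0)%:R :> int.
  case: (eqVneq S set0) => [->|nS].
    rewrite (big_pred1 set0) ?cards0 ?expr0 //.
    move=> C /=; have [->|nC] := eqVneq C set0; last by rewrite ?andbF.
    by rewrite independent0 set0I eqxx.
  rewrite big_pred0 //= => C; have [->|nC] := eqVneq C set0; last by rewrite ?andbF.
  by rewrite set0I eq_sym (negbTE nS) andbF.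
rewrite opprD addrA subrr add0r -sumrN.
apply: eq_big => C; first by rewrite card_gt0.
move=> /andP[_ ne]; by rewrite -{2}(prednK ne) exprS mulN1r opprK.
Qed.

Close Scope ring_scope.

Theorem lemma5p6 (T : finType) (e : rel T)
  (e_sym : symmetric e) (e_irr : irreflexive e)
  (G_conn : forall x y : T, connect e x y)
  (G_nontriv : 1 < #|T|)
  (U V : {set T})
  (UV_disj : [disjoint U & V]) (UV_cover : U :|: V = setT)
  (bip : forall x y, e x y -> ((x \in U) && (y \in V)) || ((x \in V) && (y \in U)))
  (UgeV : #|V| <= #|U|)
  (UL : {set T}) (UL_sub : UL \subset U)
  (UL_leaf : forall u, u \in UL -> leaf e u)
  (UL_match : forall v, v \in VW e V -> #|[set u in UL | e v u]| = 1)
  (UL_card : #|UL| = #|VW e V|)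
  (VWbar_empty : V :\: VW e V = set0) :
  (forall S : {set T}, S \subset U :\: UL -> S != set0 -> g e (U :\: UL) S = 0%R) /\
  g e (U :\: UL) set0 = (if odd #|V| then 2 else 0)%R.
Proof.
set Ubar := U :\: UL.
have VVW : forall v, v \in V -> v \in VW e V.
  by apply/subsetP; rewrite -setD_eq0 VWbar_empty.
have UnV : forall x, x \in U -> x \notin V.
  by move=> x xU; rewrite (disjointFr UV_disj xU).
have nb : forall x, exists w, e x w.
  move=> x.
  have /card_gt0P [y] : (0 < #|[set~ x]|)%N by rewrite cardsC1; lia.
  rewrite in_setC1 => yx.
  case/connectP: (G_conn x y) => [[|a p]] /= => [_ yE|/andP[exa _] _].
    by rewrite yE eqxx in yx.
  by exists a.
have nbV : forall x w, x \in U -> e x w -> w \in V.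
  move=> x w xU /bip; rewrite xU (negbTE (UnV x xU)) /= orbF; by [].
pose l v := odflt v [pick u in UL | e v u].
have hl : forall v, v \in V -> (l v \in UL) && e v (l v).
  move=> v vV; rewrite /l; case: pickP => [u /andP[-> ->] //|H].
  have /card_gt0P [u] : (0 < #|[set u in UL | e v u]|)%N by rewrite UL_match ?VVW.
  by rewrite inE H.
have leafU : forall u y z, u \in UL -> e u y -> e u z -> y = z.
  move=> u y z /UL_leaf; rewrite /leaf => /cards1P [x hx] hy hz.
  have : y \in [set y | e u y] by rewrite inE.
  have : z \in [set y | e u y] by rewrite inE.
  by rewrite hx !inE => /eqP -> /eqP ->.
have lnV : forall v x, v \in V -> x \in V -> x != l v.
  move=> v x vV xV; apply/eqP => E; case/andP: (hl v vV) => lUL _.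
  by move: (UnV _ (subsetP UL_sub _ lUL)); rewrite -E xV.
have lnUbar : forall v x, v \in V -> x \in Ubar -> x != l v.
  move=> v x vV; rewrite inE => /andP[xnUL _]; apply/eqP => E.
  by case/andP: (hl v vV); rewrite -E (negbTE xnUL).
pose tog v (C : {set T}) := if l v \in C then C :\ l v else l v |: C.
have togE : forall v C x, x != l v -> (x \in tog v C) = (x \in C).
  by move=> v C x hx; rewrite /tog; case: ifP; rewrite !inE (negbTE hx).
have togl : forall v C, (l v \in tog v C) = (l v \notin C).
  by move=> v C; rewrite /tog; case: ifP => h; rewrite !inE ?eqxx ?h.
have togK : forall v C, tog v (tog v C) = C.
  move=> v C; apply/setP => x; have [->|hx] := eqVneq x (l v).
    by rewrite togl togl negbK.
  by rewrite !togE.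
have Dtog : forall v C, v \in V -> V :\: tog v C = V :\: C.
  move=> v C vV; apply/setP => x; rewrite !inE.
  case xV: (x \in V); last by rewrite !andbF.
  by rewrite togE // lnV.
have Itog : forall v C, v \in V -> tog v C :&: Ubar = C :&: Ubar.
  move=> v C vV; apply/setP => x; rewrite !in_setI.
  case xU: (x \in Ubar); last by rewrite !andbF.
  by rewrite togE // lnUbar.
have indtog : forall v (C : {set T}), v \in V -> v \notin C -> independent e C ->
    independent e (tog v C).
  move=> v C vV vC /independentP indC; apply/independentP => x y.
  case/andP: (hl v vV) => lUL evl.
  have key : forall z, z \in C -> ~~ e (l v) z.
    move=> z zC; apply/negP => ez.
    have := leafU _ _ _ lUL ez; move/(_ v); rewrite e_sym evl => /(_ isT) zv.
    by rewrite -zv zC in vC.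
  have [->|hx] := eqVneq x (l v); have [->|hy] := eqVneq y (l v).
  - by rewrite e_irr.
  - by rewrite (togE _ _ y hy) => _; apply: key.
  - by rewrite (togE _ _ x hx) => xC _; rewrite e_sym; apply: key.
  - by rewrite !togE //; apply: indC.
have cardtog : forall v (C : {set T}), ((-1) ^+ #|tog v C| = - (-1) ^+ #|C| :> int)%R.
  move=> v C; rewrite /tog; case: ifP => h.
    by rewrite [in RHS](cardsD1 (l v) C) h exprS mulN1r opprK.
  by rewrite cardsU1 h exprS mulN1r.
pose f C := if [pick v in V :\: C] is Some v then tog v C else C.
have pickV : forall (C : {set T}) v, [pick x in V :\: C] = Some v -> v \in V :\: C.
  by move=> C v; case: pickP => // w hw [<-].
have finv : involutive f.
  move=> C; rewrite {2}/f; case hp: [pick x in V :\: C] => [v|]; last by rewrite /f hp.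
  have := pickV _ _ hp; rewrite inE => /andP[vC vV].
  by rewrite /f Dtog // hp togK.
have F_eq : forall S, (\sum_(C : {set T} | independent e C && (C :&: Ubar == S)) (-1) ^+ #|C|)%R
    = ((S == set0)%:R * (-1) ^+ #|V| :> int)%R.
  move=> S; rewrite (bigID (fun C : {set T} => V \subset C)) /=.
  rewrite [X in (_ + X)%R](@inv_sum _ _ _ f finv).
  - rewrite addr0.
    have fixE : forall C, independent e C -> V \subset C -> C = V.
      move=> C /independentP indC VC; apply/eqP; rewrite eqEsubset VC andbT.
      apply/subsetP => x xC.
      have : x \in U :|: V by rewrite UV_cover inE.
      rewrite inE; case/orP => // xU.
      case: (nb x) => w exw.
      by move: (indC x w xC (subsetP VC _ (nbV _ _ xU exw))); rewrite exw.
    have indV : independent e V.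
      apply/independentP => x y xV yV; apply/negP => /bip.
      by rewrite (disjointFl UV_disj xV) (disjointFl UV_disj yV) !andbF.
    have VU : V :&: Ubar = set0.
      apply/setP => x; rewrite !inE; case xV: (x \in V) => //=.
      by rewrite (disjointFl UV_disj xV) andbF.
    case: (eqVneq S set0) => [->|nS].
      rewrite (big_pred1 V) ?mul1r // => C /=.
      apply/idP/idP => [/andP[/andP[iC _] VC]|/eqP ->].
        by rewrite (fixE _ iC VC).
      by rewrite indV VU eqxx subxx.
    rewrite mul0r big_pred0 // => C /=; apply/negP => /andP[/andP[iC /eqP hS] VC].
    by move: nS; rewrite -hS (fixE _ iC VC) VU eqxx.
  - move=> C /andP[/andP[iC /eqP hS] nVC]; rewrite /f.
    case hp: [pick x in V :\: C] => [v|]; last by rewrite iC hS eqxx nVC.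
    have := pickV _ _ hp; rewrite inE => /andP[vC vV].
    rewrite indtog // Itog // hS eqxx /=.
    by rewrite -setD_eq0 Dtog // setD_eq0.
  - move=> C /andP[_ nVC]; rewrite /f.
    case hp: [pick x in V :\: C] => [v|]; first by rewrite cardtog.
    exfalso; move: nVC; rewrite -setD_eq0 => /negP; apply; apply/eqP.
    by apply/setP => x; move: hp; case: pickP => // H _; rewrite H inE.
split.
  by move=> S _ nS; rewrite g_F F_eq (negbTE nS) mul0r subrr.
rewrite g_F F_eq eqxx mul1r -signr_odd; by case: (odd #|V|).
Qed.
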